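(* Let $a\neq b$ be decimal digits. No absolute prime has a decimal representation in which the digit $a$ occurs at least three times and the digit $b$ occurs at least twice.
   Context: For a positive integer $N$ with decimal representation $d_1d_2\dots d_n$ (digits $d_k\in\{0,\dots,9\}$, $d_1\neq 0$), a permutation of the digits of $N$ is any integer $\sum_{k=1}^{n} d_{\sigma(k)}10^{n-k}$ with $\sigma$ a permutation of $\{1,\dots,n\}$. $N$ is called an absolute prime if every integer obtained by a permutation of the digits of $N$ (including $N$ itself) is prime. *)

(* Defs.v *)
From mathcomp Require Import all_boot.
Set Implicit Arguments. Unset Strict Implicit. Unset Printing Implicit Defensive.

Fixpoint rev_digits_aux (fuel n : nat) : seq nat :=
  match fuel with
  | 0 => [::]
  | fuel'.+1 => if n == 0 then [::] else (n %% 10) :: rev_digits_aux fuel' (n %/ 10)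
  end.

(* Decimal representation d_1 d_2 ... d_n of n, most significant first;
   for n > 0 the first digit is nonzero. *)
Definition digits (n : nat) : seq nat := rev (rev_digits_aux n n).

Definition num_of_digits (s : seq nat) : nat := foldl (fun acc d => acc * 10 + d) 0 s.

Definition absolute_prime (N : nat) : Prop :=
  0 < N /\ forall s : seq nat, perm_eq s (digits N) -> prime (num_of_digits s).

(* Main.v *)
Require Import Defs.
From mathcomp Require Import all_boot.
From mathcomp Require Import zify.

Definition gm (p acc d : nat) := (acc * 10 + d) %% p.

Definition arrs (a b : nat) : seq (seq nat) :=
  [:: [::b;b;a;a;a]; [::b;a;b;a;a]; [::b;a;a;b;a]; [::b;a;a;a;b];
      [::a;b;b;a;a]; [::a;b;a;b;a]; [::a;b;a;a;b];
      [::a;a;b;b;a]; [::a;a;b;a;b]; [::a;a;a;b;b]].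

Lemma brute : all (fun a => all (fun b => (a != b) ==> all (fun m7 => all (fun m2 =>
  has (fun t => perm_eq t [::a;a;a;b;b] && has (fun x => x != 0) (take 4 t) &&
     ((foldl (gm 7) m7 t %% 7 == 0) || (foldl (gm 2) m2 t %% 2 == 0))) (arrs a b))
  (iota 0 2)) (iota 0 7)) (iota 0 10)) (iota 0 10).
Proof. by vm_compute. Qed.

Lemma brute' a b m7 m2 : a < 10 -> b < 10 -> a != b -> m7 < 7 -> m2 < 2 ->
  has (fun t => perm_eq t [::a;a;a;b;b] && has (fun x => x != 0) (take 4 t) &&
     ((foldl (gm 7) m7 t %% 7 == 0) || (foldl (gm 2) m2 t %% 2 == 0))) (arrs a b).
Proof.
move=> Ha Hb ab H7 H2.
have /allP/(_ a) := brute; rewrite mem_iota add0n => /(_ Ha).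
move=> /allP/(_ b); rewrite mem_iota add0n => /(_ Hb); rewrite ab implyTb.
move=> /allP/(_ m7); rewrite mem_iota add0n => /(_ H7).
by move=> /allP/(_ m2); rewrite mem_iota add0n => /(_ H2).
Qed.

Lemma foldl_mod p t acc :
  foldl (fun acc d => acc * 10 + d) acc t %% p = foldl (gm p) (acc %% p) t %% p.
Proof.
elim: t acc => [|d t IH] acc /=; first by rewrite modn_mod.
rewrite IH; congr (foldl _ _ _ %% _).
by rewrite /gm -[RHS]modnDml modnMml modnDml.
Qed.

Lemma foldl_mono t acc :
  foldl (fun acc d => acc * 10 + d) 0 t <= foldl (fun acc d => acc * 10 + d) acc t.
Proof.
suff H : forall x y, x <= y -> foldl (fun acc d => acc * 10 + d) x t <=
                              foldl (fun acc d => acc * 10 + d) y t by apply: H.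
elim: t => [|d t IH] x y /= Hxy //; apply: IH; lia.
Qed.

Lemma extract (x : nat) k (s : seq nat) : k <= count_mem x s -> exists r, perm_eq s (nseq k x ++ r).
Proof.
elim: k s => [|k IH] s Hk; first by exists s.
have xs : x \in s by rewrite -has_pred1 has_count; lia.
have P := perm_to_rem xs.
have Hc : k <= count_mem x (rem x s).
  move: Hk; rewrite (permP P) /= eqxx; lia.
have [r Hr] := IH _ Hc.
exists r; apply: (perm_trans P) => /=; by rewrite perm_cons.
Qed.

Theorem lemma3 (a b : nat) : a < 10 -> b < 10 -> a != b ->
  forall N : nat, 3 <= count_mem a (digits N) -> 2 <= count_mem b (digits N) ->
  ~ absolute_prime N.
Proof.
move=> Ha Hb ab N Ca Cb [_ AP].
have [r1 Hr1] := extract _ _ _ Ca.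
have Cb1 : 2 <= count_mem b r1.
  move: Cb; rewrite (permP Hr1) /= (negbTE ab); lia.
have [r2 Hr2] := extract _ _ _ Cb1.
set n2 := num_of_digits r2.
have := @brute' a b (n2 %% 7) (n2 %% 2) Ha Hb ab (ltn_pmod n2 (isT : 0 < 7)) (ltn_pmod n2 (isT : 0 < 2)).
case/hasP=> t _ /andP[/andP[Pt Nz] Hmod].
have Pe : perm_eq (r2 ++ t) (digits N).
  rewrite perm_sym; apply: (perm_trans Hr1).
  apply: (@perm_trans _ (nseq 3 a ++ (nseq 2 b ++ r2))); first by rewrite perm_cat2l.
  change (perm_eq ([::a;a;a;b;b] ++ r2) (r2 ++ t)).
  rewrite perm_catC.
  by rewrite perm_cat2l perm_sym.
have Pr := AP _ Pe.
have St : size t = 5 by rewrite (perm_size Pt).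
have Ge : 10 <= num_of_digits t.
  move: St Nz; case: t {Pt Hmod Pe Pr} => [|x1 [|x2 [|x3 [|x4 [|x5 [|]]]]]] //= _.
  rewrite /num_of_digits /= => H; lia.
have Ge2 : 10 <= num_of_digits (r2 ++ t).
  apply: leq_trans Ge _; rewrite /num_of_digits foldl_cat; exact: foldl_mono.
case/orP: Hmod => Hm.
- have D : 7 %| num_of_digits (r2 ++ t).
    by rewrite /dvdn /num_of_digits foldl_cat foldl_mod.
  have := prime_nt_dvdP Pr; move=> /(_ 7) H.
  have : 7 = num_of_digits (r2 ++ t) by apply: H.
  lia.
- have D : 2 %| num_of_digits (r2 ++ t).
    by rewrite /dvdn /num_of_digits foldl_cat foldl_mod.
  have := prime_nt_dvdP Pr; move=> /(_ 2) H.
  have : 2 = num_of_digits (r2 ++ t) by apply: H.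
  lia.
Qed.
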